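(* Let $\varSigma$ be a $2k$-dimensional rational sphere on vertex set $[n]$, equipped with a linear system of parameters (vertex coordinates in $\mathbb{R}^{2k+1}$), and suppose $\mathcal{A}^*(\varSigma)$ has the hard Lefschetz property. Then for every subcomplex $\varDelta$ of $\varSigma$, $$(k+2)\,f_{k-1}(\varDelta)\ \ge\ f_k(\varDelta),$$ where $f_j(\varDelta)$ is the number of $j$-dimensional faces of $\varDelta$.
   Context: A $2k$-dimensional rational sphere is a simplicial complex that is a rational homology manifold (links of nonempty faces $\sigma$ have the rational homology of $S^{2k-|\sigma|}$) with the rational homology of $S^{2k}$. With $d=2k+1$, a linear system of parameters is a $d$-tuple of linear forms $\theta_j=\sum_iv_{i,j}x_i$ such that the vertex points $v_i\in\mathbb{R}^d$ of each face are linearly independent; $\mathcal{A}^*(\varSigma)=\mathbb{R}[\varSigma]/(\theta_1,\dots,\theta_d)$, where $\mathbb{R}[\varSigma]$ is the face ring (polynomial ring modulo squarefree monomials whose support is not a face). The hard Lefschetz property means there is $\ell\in\mathcal{A}^1(\varSigma)$ such that multiplication by $\ell^{d-2j}$ is an isomorphism $\mathcal{A}^j(\varSigma)\to\mathcal{A}^{d-j}(\varSigma)$ for all $j\le d/2$. *)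

(* Defs.v *)
From HB Require Import structures.
From mathcomp Require Import all_boot all_order all_algebra.
From mathcomp Require Import reals.
From mathcomp Require Import mpoly.

Set Implicit Arguments.
Unset Strict Implicit.
Unset Printing Implicit Defensive.

Import Order.TTheory GRing.Theory Num.Theory.
Local Open Scope ring_scope.

Definition complex_on (n : nat) := {set {set 'I_n}}.

Definition is_simplicial_complex (n : nat) (K : complex_on n) : Prop :=
  set0 \in K /\ forall s t : {set 'I_n}, s \in K -> t \subset s -> t \in K.

Definition faces_of_size (n : nat) (K : complex_on n) (s : nat) : {set {set 'I_n}} :=
  [set x in K | #|x| == s].

(* f_j(K) = number of j-dimensional faces = faces of cardinality j+1.
   We index by cardinality: fsize K s = f_{s-1}(K). *)
Definition fsize (n : nat) (K : complex_on n) (s : nat) : nat := #|faces_of_size K s|.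

Definition link (n : nat) (K : complex_on n) (sg : {set 'I_n}) : complex_on n :=
  [set t in K | [disjoint t & sg] && ((t :|: sg) \in K)].

Definition inc_sign (n : nat) (sg tau : {set 'I_n}) : rat :=
  (-1) ^+ (\sum_(v in sg :\: tau) #|[set u in sg | u < v]|)%N.

(* Simplicial boundary map from the chains on faces of cardinality s to those
   of cardinality s-1 (s >= 1), over Q, written as a square matrix indexed by
   all subsets of [n] (rows/columns of non-faces or of other sizes are zero,
   which does not change the rank). *)
Definition boundary_mx (n : nat) (K : complex_on n) (s : nat)
  : 'M[rat]_(#|{: {set 'I_n}}|) :=
  \matrix_(i, j)
    (let sg : {set 'I_n} := enum_val i in let tau : {set 'I_n} := enum_val j in
     if [&& (0 < s)%N, sg \in K, #|sg| == s, tau \subset sg & #|tau| == s.-1]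
     then inc_sign sg tau else 0).

(* Reduced rational Betti number of K in dimension s-1 (cardinality index s);
   the empty face contributes the (-1)-dimensional chain group. *)
Definition rbetti (n : nat) (K : complex_on n) (s : nat) : nat :=
  (fsize K s - \rank (boundary_mx K s) - \rank (boundary_mx K s.+1))%N.

(* K has the rational (reduced) homology of the sphere S^m, m >= -1,
   where the sphere dimension is encoded by its cardinality index m+1 = ms. *)
Definition rational_homology_sphere_idx (n : nat) (K : complex_on n) (ms : nat) : Prop :=
  forall s : nat, rbetti K s = (s == ms)%N.

Definition rational_sphere (n k : nat) (S : complex_on n) : Prop :=
  [/\ is_simplicial_complex S,
      (forall i : 'I_n, [set i] \in S),
      (forall sg, sg \in S -> (#|sg| <= 2 * k + 1)%N),
      rational_homology_sphere_idx S (2 * k + 1)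
    & (forall sg, sg \in S -> sg != set0 ->                 (* rational homology manifold *)
         rational_homology_sphere_idx (link S sg) (2 * k + 1 - #|sg|))].

(* Linear system of parameters, given by the vertex coordinates V (row i = v_i):
   for every face, the points v_i (i in the face) are linearly independent. *)
Definition is_lsop (R : realType) (n d : nat) (S : complex_on n) (V : 'M[R]_(n, d)) : Prop :=
  forall sg, sg \in S ->
    forall c : 'I_n -> R,
      \sum_(i in sg) c i *: row i V = 0 -> forall i, i \in sg -> c i = 0.

Definition theta (R : realType) (n d : nat) (V : 'M[R]_(n, d)) (j : 'I_d) : {mpoly R[n]} :=
  \sum_(i < n) V i j *: 'X_i.

Definition sqfree_monomial (R : realType) (n : nat) (tau : {set 'I_n}) : {mpoly R[n]} :=
  \prod_(i in tau) 'X_i.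

(* Membership in the ideal I_S + (theta_1, ..., theta_d) of R[x_1..x_n], where
   I_S is the Stanley-Reisner ideal generated by the squarefree monomials whose
   support is not a face. A(S) = R[x]/(this ideal). *)
Definition in_lsop_ideal (R : realType) (n d : nat) (S : complex_on n)
    (V : 'M[R]_(n, d)) (f : {mpoly R[n]}) : Prop :=
  exists (g : 'I_d -> {mpoly R[n]}) (h : {set 'I_n} -> {mpoly R[n]}),
    f = \sum_(j < d) theta V j * g j
        + \sum_(tau | tau \notin S) h tau * sqfree_monomial R tau.

(* Hard Lefschetz property of A*(S) = R[S]/(theta): there is l in A^1
   (represented by a linear form) such that multiplication by l^(d-2j) is an
   isomorphism A^j -> A^(d-j) for all j <= d/2.  A^j is the quotient of the
   homogeneous degree-j polynomials by the degree-j part of the (homogeneous)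
   ideal; injectivity and surjectivity of the induced map are spelled out. *)
Definition hard_lefschetz (R : realType) (n d : nat) (S : complex_on n)
    (V : 'M[R]_(n, d)) : Prop :=
  exists l : {mpoly R[n]}, l \is [in R[n], 1.-homog] /\
    forall j : nat, (2 * j <= d)%N ->
      (forall p : {mpoly R[n]}, p \is [in R[n], j.-homog] ->
          in_lsop_ideal S V (l ^+ (d - 2 * j) * p) -> in_lsop_ideal S V p)
      /\
      (forall q : {mpoly R[n]}, q \is [in R[n], (d - j).-homog] ->
          exists2 p : {mpoly R[n]}, p \is [in R[n], j.-homog] &
            in_lsop_ideal S V (q - l ^+ (d - 2 * j) * p)).

(* Main.v *)
Require Import Defs.
From HB Require Import structures.
From mathcomp Require Import all_boot all_order all_algebra.
From mathcomp Require Import reals.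
From mathcomp Require Import mpoly.
From mathcomp Require Import ssrcomplements.
From mathcomp Require Import zify.
From mathcomp Require boolp.

Set Implicit Arguments.
Unset Strict Implicit.
Unset Printing Implicit Defensive.
Import Order.TTheory GRing.Theory Num.Theory.

Section Monomials.
Variable n : nat.
Implicit Types (m : 'X_{1..n}).
Local Open Scope nat_scope.

Definition supp m : {set 'I_n} := [set i | m i != 0].
Definition msq (t : {set 'I_n}) : 'X_{1..n} := (\sum_(i in t) U_(i))%MM.

Lemma msqE t i : msq t i = (i \in t).
Proof.
rewrite /msq mnm_sumE (eq_bigr (fun j => (j == i) : nat)); last by move=> j _; rewrite mnm1E.
rewrite big_mkcond /= (bigD1 i) //= big1 ?addn0; first by rewrite eqxx; case: (i \in t).
by move=> j /negbTE ->; case: (j \in t).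
Qed.

Lemma supp_msq t : supp (msq t) = t.
Proof. by apply/setP=> i; rewrite inE msqE; case: (i \in t). Qed.

Lemma mdeg_msq t : mdeg (msq t) = #|t|.
Proof.
rewrite mdegE (eq_bigr (fun i => (i \in t) : nat)); last by move=> i _; rewrite msqE.
rewrite -sum1_card [RHS]big_mkcond /=; apply: eq_bigr => i _; by case: (i \in t).
Qed.

Lemma suppD m1 m2 : supp (m1 + m2)%MM = supp m1 :|: supp m2.
Proof. by apply/setP=> i; rewrite !inE mnmDE addn_eq0 negb_and. Qed.

Lemma supp1 i : supp U_(i)%MM = [set i].
Proof. by apply/setP=> j; rewrite !inE mnm1E eqb0 negbK eq_sym. Qed.

Lemma supp_subD m1 m2 : supp m1 \subset supp (m1 + m2)%MM.
Proof. by rewrite suppD subsetUl. Qed.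

Lemma card_supp_le m : #|supp m| <= mdeg m.
Proof.
rewrite mdegE -sum1_card big_mkcond /=; apply: leq_sum => i _.
by rewrite inE; case: (m i).
Qed.

Lemma card_supp_lt m u : 1 < m u -> #|supp m| < mdeg m.
Proof.
move=> hu; rewrite mdegE -sum1_card big_mkcond /= (bigD1 u) //= (bigD1 u (P:=predT)) //=.
rewrite inE; have -> : (m u != 0) by case: (m u) hu.
rewrite -addSn leq_add //; apply: leq_sum => i _.
by rewrite inE; case: (m i).
Qed.

Lemma msq_supp m : (forall u, m u <= 1) -> m = msq (supp m).
Proof.
move=> h; apply/mnmP=> i; rewrite msqE inE; have := h i.
by case: (m i) => [|[|]].
Qed.

Lemma supp_subU m u : 1 < m u -> supp (m - U_(u))%MM = supp m.
Proof.
move=> hu; apply/setP=> i; rewrite !inE mnmBE mnm1E.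
case: (@eqP _ u i) => [<-|_] /=; last by rewrite subn0.
by case: (m u) hu => [|[|]].
Qed.

Lemma subUK m u : 0 < m u -> (m - U_(u) + U_(u))%MM = m.
Proof. by move=> hu; apply: submK; rewrite lep1mP -lt0n. Qed.

Lemma exists_big m : #|supp m| < mdeg m -> exists u, 1 < m u.
Proof.
move=> h; apply/existsP; apply: contraLR h; rewrite negb_exists => /forallP hu.
rewrite -leqNgt {1}(msq_supp (m := m)) ?mdeg_msq // => u.
by have := hu u; rewrite -leqNgt.
Qed.

End Monomials.

Section Functional.
Variables (R : realType) (n : nat).
Local Open Scope ring_scope.
Variable phi : 'X_{1..n} -> R.

Definition Phi (p : {mpoly R[n]}) : R := \sum_(m <- msupp p) p@_m * phi m.

Lemma PhiE p i : (msize p <= i)%N ->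
  Phi p = \sum_(m : 'X_{1..n < i}) p@_m * phi m.
Proof.
move=> le_pi; set I : subFinType _ := 'X_{1..n < i}.
rewrite /Phi (big_mksub I) ?msupp_uniq //=; first last.
  by move=> x /msize_mdeg_lt /leq_trans; apply.
rewrite big_rmcond //= => j /memN_msupp_eq0 ->.
by rewrite mul0r.
Qed.

Lemma Phi_is_additive : additive Phi.
Proof.
move=> p q /=; pose i := maxn (msize p) (msize q).
have hp : (msize p <= i)%N by rewrite leq_maxl.
have hq : (msize q <= i)%N by rewrite leq_maxr.
have hpq : (msize (p - q) <= i)%N.
  by apply: leq_trans (msizeD_le _ _) _; rewrite msizeN geq_max hp hq.
rewrite !(PhiE hp) !(PhiE hq) (PhiE hpq) -sumrB; apply/eq_bigr => m _.
by rewrite mcoeffB mulrBl.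
Qed.

HB.instance Definition _ := GRing.isAdditive.Build {mpoly R[n]} R Phi
  Phi_is_additive.

Lemma PhiZ c p : Phi (c *: p) = c * Phi p.
Proof.
have hp : (msize p <= msize p)%N by [].
have hcp : (msize (c *: p) <= msize p)%N by apply: msizeZ_le.
rewrite (PhiE hp) (PhiE hcp) mulr_sumr; apply/eq_bigr => m _.
by rewrite mcoeffZ mulrA.
Qed.

Lemma PhiX m : Phi 'X_[m] = phi m.
Proof. by rewrite /Phi msuppX big_seq1 mcoeffX eqxx mul1r. Qed.

Lemma Phi_sum (I : Type) (r : seq I) (P : pred I) (F : I -> {mpoly R[n]}) :
  Phi (\sum_(i <- r | P i) F i) = \sum_(i <- r | P i) Phi (F i).
Proof. exact: (raddf_sum (Phi : {additive _ -> _})). Qed.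

Lemma PhiMX f m : Phi (f * 'X_[m]) = \sum_(m' <- msupp f) f@_m' * phi (m' + m)%MM.
Proof.
rewrite {1}[f]mpolyE mulr_suml Phi_sum; apply/eq_bigr => m' _.
by rewrite -scalerAl -mpolyXD PhiZ PhiX.
Qed.

Lemma PhiB p q : Phi (p - q) = Phi p - Phi q.
Proof. exact: Phi_is_additive. Qed.

End Functional.

Section Dual.
Variables (R : realType) (n d : nat) (V : 'M[R]_(n, d)).
Local Open Scope ring_scope.

Lemma dual_exists (rho : {set 'I_n}) :
  (forall c : 'I_n -> R, \sum_(i in rho) c i *: row i V = 0 ->
      forall i, i \in rho -> c i = 0) ->
  exists L : 'I_n -> 'I_d -> R, forall u x, u \in rho -> x \in rho ->
     \sum_l L u l * V x l = (u == x)%:R.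
Proof.
move=> indep.
pose B : 'M[R]_(#|rho|, d) := \matrix_(i, l) V (enum_val i) l.
have evE j j' : (enum_val j == enum_val j' :> 'I_n) = (j == j').
  by rewrite (inj_eq (@enum_val_inj _ _)).
have rfB : row_free B.
  rewrite -kermx_eq0; apply/eqP; apply/eqP; rewrite -submx0; apply/row_subP => i.
  rewrite submx0; set u := row i (kermx B).
  have uB : u *m B = 0 by rewrite /u -row_mul mulmx_ker row0.
  pose c (x : 'I_n) := \sum_(j < #|rho| | enum_val j == x) u 0 j.
  have cE j : c (enum_val j) = u 0 j.
    by rewrite /c (eq_bigl (pred1 j)) ?big_pred1_eq // => j'; rewrite /= evE.
  have hc : \sum_(i in rho) c i *: row i V = 0.
    rewrite (big_enum_val (fun i => c i *: row i V)) /=.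
    transitivity (u *m B); last exact: uB.
    apply/rowP => l; rewrite summxE !mxE.
    by apply: eq_bigr => j _; rewrite cE !mxE.
  apply/eqP/rowP => j; rewrite [RHS]mxE -cE; apply: (indep _ hc).
  exact: enum_valP.
have [B' BB'] := row_freeP rfB.
exists (fun u l => \sum_(j < #|rho| | enum_val j == u) B' l j) => u x hu hx.
have Eu := enum_rankK_in hu hu; have Ex := enum_rankK_in hu hx.
set ju := enum_rank_in hu u in Eu; set jx := enum_rank_in hu x in Ex.
have -> : (u == x)%:R = (B *m B') jx ju :> R.
  by rewrite BB' mxE -evE Eu Ex eq_sym.
rewrite mxE.
apply: eq_bigr => l _; rewrite mulrC !mxE Ex; congr (_ * _).
by rewrite (eq_bigl (pred1 ju)) ?big_pred1_eq // => j'; rewrite /= -Eu evE.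
Qed.

End Dual.

Section Main.
Variables (R : realType) (n d k : nat) (V : 'M[R]_(n, d)) (D : complex_on n).
Hypothesis Dclosed : forall s t : {set 'I_n}, s \in D -> t \subset s -> t \in D.
Variable L : {set 'I_n} -> 'I_n -> 'I_d -> R.
Implicit Types (m : 'X_{1..n}) (rho t sg : {set 'I_n}) (u w x a b : 'I_n).
Local Open Scope ring_scope.

Definition lin (M : 'I_d -> R) (w : 'I_n) : R := \sum_l M l * V w l.

Hypothesis HL : forall rho, rho \in D -> forall u x, u \in rho -> x \in rho ->
  lin (L rho u) x = (u == x)%:R.

Definition valid (phi : 'X_{1..n} -> R) :=
  (forall m, supp m \notin D -> phi m = 0) /\
  (forall m j, \sum_i V i j * phi (m + U_(i))%MM = 0).

Lemma supp_notin_add m m' : supp m \notin D -> supp (m + m')%MM \notin D.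
Proof.
apply: contra => h; apply: Dclosed h _; exact: supp_subD.
Qed.

Lemma valid_lin phi : valid phi -> forall m (M : 'I_d -> R),
  \sum_i lin M i * phi (m + U_(i))%MM = 0.
Proof.
move=> [_ h] m M; rewrite /lin.
under eq_bigr do rewrite mulr_suml.
rewrite exchange_big /= big1 // => l _.
under eq_bigr do rewrite -mulrA.
by rewrite -mulr_sumr h mulr0.
Qed.

Definition Tk := faces_of_size D k.

Lemma card_suppU1 m w : w \notin supp m -> #|supp (m + U_(w))%MM| = (#|supp m|).+1%N.
Proof. by move=> hw; rewrite suppD supp1 setUC cardsU1 hw. Qed.

Lemma mdegU m w : mdeg (m + U_(w))%MM = (mdeg m).+1.
Proof. by rewrite mdegD mdeg1 addn1. Qed.

Definition span_prop m := exists a : {set 'I_n} -> R, forall phi, valid phi -> forall m',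
    phi (m + m')%MM = \sum_(t in Tk) a t * phi (msq t + m')%MM.

Lemma span_base m : mdeg m = k ->
  supp m \notin D \/ (forall u, m u <= 1)%N -> span_prop m.
Proof.
move=> hdeg [nD|small].
  exists (fun _ => 0) => phi [h0 _] m'.
  by rewrite (h0 (m + m')%MM) ?supp_notin_add //; symmetry; apply: big1 => t _; rewrite mul0r.
have [inD|nD] := boolP (supp m \in D); last first.
  exists (fun _ => 0) => phi [h0 _] m'.
  by rewrite (h0 (m + m')%MM) ?supp_notin_add //; symmetry; apply: big1 => t _; rewrite mul0r.
have Em := msq_supp small.
have hT : supp m \in Tk by rewrite inE inD -hdeg {2}Em mdeg_msq eqxx.
exists (fun t => (t == supp m)%:R) => phi _ m'.
rewrite (bigD1 (supp m)) //= eqxx mul1r -Em big1 ?addr0 //.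
by move=> t /andP [_ /negbTE ->]; rewrite mul0r.
Qed.

Lemma span_aux e : forall m, mdeg m = k -> (k - #|supp m| <= e)%N -> span_prop m.
Proof.
elim: e => [|e IH] m hdeg he;
 (have [inD|nD] := boolP (supp m \in D); last exact: (span_base hdeg (or_introl nD)));
 (have [/forallP small|] := boolP [forall u, (m u <= 1)%N]; first exact: (span_base hdeg (or_intror small)));
 rewrite negb_forall => /existsP [u]; rewrite -ltnNge => hu.
  have := card_supp_lt hu; rewrite hdeg; lia.
set rho := supp m.
have urho : u \in rho by rewrite inE; case: (m u) hu.
set m1 := (m - U_(u))%MM.
have Em1 : (m1 + U_(u))%MM = m by rewrite subUK // ltnW.
have s1 : supp m1 = rho := supp_subU hu.
have d1 : mdeg (m1 + U_(u))%MM = k by rewrite Em1.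
have ex : forall w, exists a : {set 'I_n} -> R, w \notin rho ->
   forall phi, valid phi -> forall m',
    phi ((m1 + U_(w)) + m')%MM = \sum_(t in Tk) a t * phi (msq t + m')%MM.
  move=> w; have [wr|wr] := boolP (w \in rho).
    by exists (fun _ => 0).
  have h1 : mdeg (m1 + U_(w))%MM = k by rewrite mdegU -(mdegU m1 u) d1.
  have h2 : (k - #|supp (m1 + U_(w))%MM| <= e)%N.
    rewrite card_suppU1 ?s1 //.
    have := card_supp_lt hu; rewrite hdeg -/rho; move: he; rewrite -/rho; clear; lia.
  have [a Ha] := IH _ h1 h2.
  by exists a.
have [A HA] := boolp.choice ex.
exists (fun t => - \sum_(w | w \notin rho) lin (L rho u) w * A w t) => phi vphi m'.
have := valid_lin vphi (m1 + m')%MM (L rho u).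
rewrite (bigID (fun x => x \in rho)) /=.
rewrite (bigD1 u) //= big1 => [|x /andP [xr xu]]; last first.
  by rewrite HL // eq_sym (negbTE xu) mul0r.
rewrite HL // eqxx mul1r addr0 => /eqP; rewrite addr_eq0 => /eqP.
rewrite -addmA [(m' + _)%MM]addmC addmA Em1 => ->.
rewrite (eq_bigr (fun x => lin (L rho u) x * \sum_(t in Tk) A x t * phi (msq t + m')%MM)); last first.
  by move=> x xr; rewrite -(HA x xr phi vphi m') -addmA [(m' + _)%MM]addmC addmA.
rewrite -sumrN.
rewrite (eq_bigr (fun i => \sum_(t in Tk) - (lin (L rho u) i * (A i t * phi (msq t + m')%MM)))); last first.
  by move=> i _; rewrite mulr_sumr -sumrN.
rewrite exchange_big /=; apply: eq_bigr => t _.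
by rewrite mulNr mulr_suml -sumrN; apply: eq_bigr => x _; rewrite mulrA.
Qed.

Lemma span_mon m : mdeg m = k -> span_prop m.
Proof. by move=> h; apply: (span_aux (e := (k - #|supp m|)%N)). Qed.


Lemma suppU_in m i : i \in supp m -> supp (m + U_(i))%MM = supp m.
Proof. by move=> hi; rewrite suppD supp1; apply/setUidPl; rewrite sub1set. Qed.

Lemma card_supp_add m m' : (#|supp m| <= #|supp (m + m')%MM|)%N.
Proof. exact/subset_leq_card/supp_subD. Qed.

Lemma msq_add1 (t : {set 'I_n}) (x : 'I_n) : x \notin t -> (msq t + U_(x))%MM = msq (t :|: [set x]).
Proof.
move=> hx; apply/mnmP => i; rewrite mnmDE !msqE mnm1E in_setU in_set1 eq_sym.
by case: (i =P x) => [->|_]; rewrite ?(negbTE hx) ?orbF ?orbT ?addn0.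
Qed.

Section Ext.
Variable cf : {set 'I_n} -> R.
Hypothesis Hc0 : forall sg, cf sg != 0 -> (sg \in D) && (#|sg| == k.+1).

Definition Nvec rho j : 'I_d -> R :=
  fun l => (l == j)%:R - \sum_(u in rho) L rho u l * V u j.

Hypothesis Hbal : forall t, t \in D -> #|t| = k -> forall j,
  \sum_(x | x \notin t) lin (Nvec t j) x * cf (t :|: [set x]) = 0.

Lemma lin_NvecE rho j w :
  lin (Nvec rho j) w = V w j - \sum_(u in rho) lin (L rho u) w * V u j.
Proof.
rewrite /lin /Nvec; under eq_bigr do rewrite mulrBl.
rewrite sumrB; congr (_ - _).
  rewrite (bigD1 j) //= eqxx mul1r big1 ?addr0 // => l /negbTE ->.
  by rewrite mul0r.
under eq_bigr do rewrite mulr_suml.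
rewrite exchange_big /=; apply: eq_bigr => u _; rewrite mulr_suml.
by apply: eq_bigr => l _; rewrite mulrAC.
Qed.

Lemma lin_Nvec rho j w : rho \in D -> w \in rho -> lin (Nvec rho j) w = 0.
Proof.
move=> hr hw; rewrite lin_NvecE (bigD1 w) //= HL // eqxx mul1r big1 ?addr0 ?subrr //.
by move=> u /andP [hu /negbTE nuw]; rewrite HL // nuw mul0r.
Qed.

Definition Inv s (phi : 'X_{1..n} -> R) :=
  [/\ (forall m, phi m != 0 -> [&& supp m \in D, mdeg m == k.+1 & (s <= #|supp m|)%N]),
      (forall m j, (s <= #|supp m|)%N -> \sum_i V i j * phi (m + U_(i))%MM = 0)
    & (forall sg, #|sg| = k.+1 -> phi (msq sg) = cf sg)].

Lemma Inv_base : exists phi, Inv k.+1 phi.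
Proof.
exists (fun m => if (mdeg m == k.+1) && (#|supp m| == k.+1) then cf (supp m) else 0).
split.
- move=> m; case: ifP => [/andP [/eqP -> /eqP ->] /Hc0 /andP [-> _]|]; last by rewrite eqxx.
  by rewrite eqxx leqnn.
- move=> m j hs; apply: big1 => i _; case: ifP; last by rewrite mulr0.
  move=> /andP [/eqP hd _]; have := card_supp_le m; rewrite mdegU in hd; lia.
- by move=> sg hs; rewrite mdeg_msq supp_msq hs eqxx.
Qed.

Section Step.
Variables (s : nat) (phi : 'X_{1..n} -> R).
Hypothesis Iphi : Inv s.+1 phi.
Hypothesis Hs : (s <= k)%N.

Lemma phi_small m : (#|supp m| <= s)%N -> phi m = 0.
Proof.
move=> h; apply/eqP; case: Iphi => I1 _ _; apply: contraTT h => /I1 /and3P [_ _]; lia.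
Qed.

Lemma phi_deg m : mdeg m != k.+1 -> phi m = 0.
Proof.
move=> h; apply/eqP; case: Iphi => I1 _ _; apply: contraTT h => /I1 /and3P [_ -> _] //.
Qed.

Lemma I2lin m (M : 'I_d -> R) : (s < #|supp m|)%N ->
  \sum_i lin M i * phi (m + U_(i))%MM = 0.
Proof.
move=> hs; rewrite /lin; under eq_bigr do rewrite mulr_suml.
rewrite exchange_big /= big1 // => l _.
under eq_bigr do rewrite -mulrA.
case: Iphi => _ I2 _; by rewrite -mulr_sumr I2 // mulr0.
Qed.

Definition Hfun (M N : 'I_d -> R) m2 :=
  \sum_(w in supp m2) \sum_x lin M w * lin N x * phi (m2 + U_(w) + U_(x))%MM.

Lemma Hfun_full M N m2 : #|supp m2| = s ->
  Hfun M N m2 = \sum_w \sum_x lin M w * lin N x * phi (m2 + U_(w) + U_(x))%MM.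
Proof.
move=> hs; rewrite [RHS](bigID (fun w => w \in supp m2)) /= [X in _ + X]big1 ?addr0 // => w hw.
under eq_bigr do rewrite -mulrA.
by rewrite -mulr_sumr I2lin ?mulr0 // card_suppU1 // hs.
Qed.

Lemma Hsym M N m2 : #|supp m2| = s -> Hfun M N m2 = Hfun N M m2.
Proof.
move=> hs; rewrite !Hfun_full // exchange_big /=; apply: eq_bigr => w _.
apply: eq_bigr => x _; rewrite [lin M x * _]mulrC -addmA [(U_(x) + _)%MM]addmC addmA.
by [].
Qed.

Lemma Hfun_L m2 a N : supp m2 \in D -> a \in supp m2 ->
  Hfun (L (supp m2) a) N m2 = \sum_x lin N x * phi (m2 + U_(a) + U_(x))%MM.
Proof.
move=> hD ha; rewrite /Hfun (bigD1 a) //= [X in _ + X]big1 ?addr0.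
  by apply: eq_bigr => x _; rewrite HL // eqxx mul1r.
move=> w /andP [hw nwa]; apply: big1 => x _.
by rewrite HL // eq_sym (negbTE nwa) !mul0r.
Qed.

Lemma Hfun_N m2 j N : supp m2 \in D -> Hfun (Nvec (supp m2) j) N m2 = 0.
Proof.
move=> hD; apply: big1 => w hw; apply: big1 => x _.
by rewrite lin_Nvec // !mul0r.
Qed.

Definition F m u := - \sum_w lin (L (supp m) u) w * phi (m - U_(u) + U_(w))%MM.

Lemma Findep m a b : supp m \in D -> #|supp m| = s -> (1 < m a)%N -> (1 < m b)%N ->
  F m a = F m b.
Proof.
move=> hD hs ha hb; have [<-//|nab] := eqVneq a b.
set m2 := (m - U_(a) - U_(b))%MM.
have hb' : (1 < (m - U_(a))%MM b)%N by rewrite mnmBE mnm1E (negbTE nab) subn0.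
have ha' : (1 < (m - U_(b))%MM a)%N by rewrite mnmBE mnm1E eq_sym (negbTE nab) subn0.
have s2 : supp m2 = supp m by rewrite /m2 supp_subU // supp_subU.
have E1 : (m - U_(a))%MM = (m2 + U_(b))%MM.
  rewrite /m2; symmetry; exact: (subUK (m := (m - U_(a))%MM) (u := b) (ltnW hb')).
have E2 : (m - U_(b))%MM = (m2 + U_(a))%MM.
  rewrite /m2 submDA [(U_(a) + _)%MM]addmC -submDA; symmetry; apply: subUK; rewrite ltnW //.
have hs2 : #|supp m2| = s by rewrite s2.
have hD2 : supp m2 \in D by rewrite s2.
have aS : a \in supp m2 by rewrite s2 inE; case: (m a) ha.
have bS : b \in supp m2 by rewrite s2 inE; case: (m b) hb.
rewrite /F E1 E2 -s2 -(Hfun_L _ hD2 bS) -(Hfun_L _ hD2 aS).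
by rewrite Hsym.
Qed.

Lemma Npsi m1 j : supp m1 \in D -> #|supp m1| = s ->
  \sum_x lin (Nvec (supp m1) j) x * phi (m1 + U_(x))%MM = 0.
Proof.
move=> hD hs.
have [hd|hd] := eqVneq (mdeg m1) k; last first.
  apply: big1 => x _; rewrite phi_deg ?mulr0 // mdegU eqSS //.
have [/forallP small|] := boolP [forall u, (m1 u <= 1)%N]; last first.
  rewrite negb_forall => /existsP [u]; rewrite -ltnNge => hu.
  set m2 := (m1 - U_(u))%MM.
  have s2 : supp m2 = supp m1 by rewrite supp_subU.
  have E : m1 = (m2 + U_(u))%MM by rewrite subUK // ltnW.
  have uS : u \in supp m2 by rewrite s2 inE; case: (m1 u) hu.
  have hD2 : supp m2 \in D by rewrite s2.
  rewrite -s2 E -(Hfun_L _ hD2 uS) Hsym ?s2 //.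
  by rewrite -{1}s2 Hfun_N.
have Em := msq_supp small.
set rho := supp m1 in hD hs Em *.
have hk : #|rho| = k by rewrite -hd Em mdeg_msq.
rewrite (bigID (fun x => x \in rho)) /= big1 ?add0r; last first.
  by move=> x hx; rewrite lin_Nvec // mul0r.
rewrite -[RHS](Hbal hD hk j); apply: eq_bigr => x hx.
by case: Iphi => _ _ I3; rewrite Em msq_add1 // I3 // setUC cardsU1 hx hk.
Qed.


Definition phi' m : R :=
  if [&& #|supp m| == s, mdeg m == k.+1 & supp m \in D] then
    (if [pick u | (1 < m u)%N] is Some u then F m u else 0)
  else phi m.

Lemma phi'_out m : #|supp m| != s -> phi' m = phi m.
Proof. by move=> h; rewrite /phi' (negbTE h). Qed.

Lemma phi'_1 m : phi' m != 0 -> [&& supp m \in D, mdeg m == k.+1 & (s <= #|supp m|)%N].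
Proof.
rewrite /phi'; case: ifP => [/and3P [/eqP -> -> ->] _|_]; first by rewrite leqnn.
case: Iphi => I1 _ _ /I1 /and3P [-> -> h] /=; exact: ltnW.
Qed.

Lemma phi'_zD m : supp m \notin D -> phi' m = 0.
Proof. by move=> h; apply/eqP; apply: contraNT h => /phi'_1 /and3P []. Qed.

Lemma phi'_zdeg m : mdeg m != k.+1 -> phi' m = 0.
Proof. by move=> h; apply/eqP; apply: contraNT h => /phi'_1 /and3P []. Qed.

Lemma phi'_in m i : supp m \in D -> #|supp m| = s -> mdeg m = k -> i \in supp m ->
  phi' (m + U_(i))%MM = - \sum_w lin (L (supp m) i) w * phi (m + U_(w))%MM.
Proof.
move=> hD hs hd hi.
have Es := suppU_in hi.
have hi2 : (1 < (m + U_(i))%MM i)%N.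
  by move: hi; rewrite inE mnmDE mnm1E eqxx addn1 ltnS lt0n.
rewrite /phi' Es hs eqxx mdegU hd eqxx hD /=.
case: pickP => [u hu|/(_ i)]; last by rewrite hi2.
rewrite (Findep _ _ hu hi2) ?Es //.
by rewrite /F Es addmK.
Qed.

Lemma phi'_2 m j : (s <= #|supp m|)%N -> \sum_i V i j * phi' (m + U_(i))%MM = 0.
Proof.
move=> hs; have [lt|eq] : (s < #|supp m|)%N \/ s = #|supp m| by lia.
  rewrite (eq_bigr (fun i => V i j * phi (m + U_(i))%MM)).
    by case: Iphi => _ I2 _; apply: I2.
  move=> i _; rewrite phi'_out //; have := card_supp_add m U_(i); lia.
have [hD|nD] := boolP (supp m \in D); last first.
  by apply: big1 => i _; rewrite phi'_zD ?mulr0 // supp_notin_add.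
have [hd|hd] := eqVneq (mdeg m) k; last first.
  by apply: big1 => i _; rewrite phi'_zdeg ?mulr0 // mdegU eqSS.
rewrite (bigID (fun i => i \in supp m)) /=.
rewrite (eq_bigr (fun i => V i j * - \sum_w lin (L (supp m) i) w * phi (m + U_(w))%MM)); last first.
  by move=> i hi; rewrite phi'_in.
rewrite [X in _ + X](eq_bigr (fun i => V i j * phi (m + U_(i))%MM)); last first.
  by move=> i hi; rewrite phi'_out // card_suppU1 // -eq; lia.
rewrite -[RHS](Npsi j hD (esym eq)).
have R1 : \sum_x lin (Nvec (supp m) j) x * phi (m + U_(x))%MM =
  \sum_(x | x \notin supp m) V x j * phi (m + U_(x))%MM -
  \sum_(u in supp m) V u j * \sum_x lin (L (supp m) u) x * phi (m + U_(x))%MM.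
  rewrite (eq_bigr (fun x => V x j * phi (m + U_(x))%MM - \sum_(u in supp m) V u j * (lin (L (supp m) u) x * phi (m + U_(x))%MM))); last first.
    move=> x _; rewrite lin_NvecE mulrBl mulr_suml; congr (_ - _).
    by apply: eq_bigr => u _; rewrite [lin _ _ * _]mulrC -mulrA.
  rewrite sumrB; congr (_ - _).
    rewrite (bigID (fun i => i \in supp m)) /= [X in X + _]big1 ?add0r //.
    by move=> x hx; rewrite phi_small ?mulr0 // suppU_in // eq.
  rewrite exchange_big /=; apply: eq_bigr => u _.
  by rewrite mulr_sumr.
rewrite R1 addrC; congr (_ + _).
rewrite -sumrN; apply: eq_bigr => u _.
by rewrite mulrN.
Qed.

Lemma Inv_step : Inv s phi'.
Proof.
split; [exact: phi'_1 | exact: phi'_2 |].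
move=> sg hsg; rewrite phi'_out; last by rewrite supp_msq hsg; apply/eqP; lia.
by case: Iphi => _ _ I3; apply: I3.
Qed.

End Step.

Lemma Inv_all (t : nat) : (t <= k.+1)%N -> exists phi, Inv (k.+1 - t) phi.
Proof.
elim: t => [|t IH] ht; first by rewrite subn0; exact: Inv_base.
have [phi Iphi] := IH (ltnW ht).
have E : (k.+1 - t = (k - t).+1)%N by lia.
rewrite E in Iphi.
have E2 : (k.+1 - t.+1 = k - t)%N by lia.
rewrite E2; exists (phi' (k - t) phi); apply: Inv_step => //; exact: leq_subr.
Qed.

Lemma extension : exists phi, valid phi /\ forall sg, #|sg| = k.+1 -> phi (msq sg) = cf sg.
Proof.
have [phi [I1 I2 I3]] := Inv_all (leqnn k.+1).
rewrite subnn in I1 I2.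
exists phi; split => //; split; last by move=> m j; apply: I2.
move=> m h; apply/eqP; apply: contraNT h => /I1 /and3P [] //.
Qed.

End Ext.

Lemma sqfreeE t : sqfree_monomial R t = 'X_[msq t].
Proof. by rewrite /sqfree_monomial mprodXE. Qed.

Lemma Phi_kill phi f : valid phi -> in_lsop_ideal D V f -> Phi phi f = 0.
Proof.
move=> [h0 hc] [g [h ->]].
rewrite raddfD /= !Phi_sum.
rewrite [X in _ + X]big1 ?addr0; last first.
  move=> t ht; rewrite sqfreeE PhiMX big1 // => m _.
  rewrite h0 ?mulr0 //; apply: contra ht => hD; apply: Dclosed hD _.
  by rewrite suppD supp_msq subsetUr.
apply: big1 => j _.
rewrite mulrC /theta mulr_sumr Phi_sum.
under eq_bigr do rewrite -scalerAr PhiZ PhiMX mulr_sumr.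
rewrite exchange_big /= big1 // => m _.
under eq_bigr do rewrite mulrCA.
by rewrite -mulr_sumr hc mulr0.
Qed.

Definition Ek := faces_of_size D k.+1.

Variables (l : {mpoly R[n]}) (p : {set 'I_n} -> {mpoly R[n]}) (a : 'X_{1..n} -> {set 'I_n} -> R).
Hypothesis Hp : forall sg, sg \in Ek ->
  p sg \is [in R[n], k.-homog] /\ in_lsop_ideal D V ('X_[msq sg] - l * p sg).
Hypothesis Ha : forall m, mdeg m = k -> forall phi, valid phi -> forall m',
  phi (m + m')%MM = \sum_(t in Tk) a m t * phi (msq t + m')%MM.

Definition alpha sg t := \sum_(m <- msupp (p sg)) (p sg)@_m * a m t.

Lemma key phi sg : valid phi -> sg \in Ek ->
  phi (msq sg) = \sum_(t in Tk) alpha sg t * Phi phi (l * 'X_[msq t]).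
Proof.
move=> vphi hsg; have [hom hid] := Hp hsg.
have := Phi_kill vphi hid; rewrite PhiB PhiX => /eqP; rewrite subr_eq0 => /eqP ->.
rewrite {1}[p sg]mpolyE mulr_sumr Phi_sum.
under eq_bigr do rewrite -scalerAr PhiZ.
rewrite /alpha; under [RHS]eq_bigr do rewrite mulr_suml.
rewrite [RHS]exchange_big /=; apply: eq_big_seq => m hm.
have hdm : mdeg m = k by move/dhomogP: hom => /(_ m hm).
have E1 : Phi phi (l * 'X_[m]) = \sum_(t in Tk) a m t * Phi phi (l * 'X_[msq t]).
  rewrite PhiMX.
  transitivity (\sum_(m' <- msupp l) \sum_(t in Tk) l@_m' * (a m t * phi (msq t + m')%MM)).
    apply: eq_bigr => m' _; rewrite addmC (Ha hdm vphi) mulr_sumr //.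
  rewrite exchange_big /=; apply: eq_bigr => t _.
  rewrite PhiMX mulr_sumr; apply: eq_bigr => m' _.
  by rewrite mulrCA addmC.
rewrite E1 mulr_sumr; apply: eq_bigr => t _.
by rewrite mulrA.
Qed.


Lemma rank_bigcap (mm : nat) (I : finType) (P : pred I) (K : I -> 'M[R]_mm) :
  (mm <= \rank (\bigcap_(i | P i) K i)%MS + \sum_(i | P i) (mm - \rank (K i)))%N.
Proof.
elim/big_rec2: _ => [|i X s Pi IH]; first by rewrite mxrank1 addn0.
have h1 := mxrank_sum_cap (K i) X.
have h2 := rank_leq_col (K i + X)%MS.
have h3 := rank_leq_col (K i).
lia.
Qed.

Definition cfv (c : 'rV[R]_#|Ek|) sg := \sum_i (enum_val i == sg)%:R * c 0 i.

Lemma cfv_val c i : cfv c (enum_val i) = c 0 i.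
Proof.
rewrite /cfv (bigD1 i) //= eqxx mul1r big1 ?addr0 // => j /negbTE hj.
by rewrite (inj_eq (@enum_val_inj _ _)) hj mul0r.
Qed.

Lemma cfv_out c sg : sg \notin Ek -> cfv c sg = 0.
Proof.
move=> h; apply: big1 => i _; case: eqP => [E|_]; last by rewrite mul0r.
by move: h; rewrite -E enum_valP.
Qed.

Lemma cfv_Hc0 c sg : cfv c sg != 0 -> (sg \in D) && (#|sg| == k.+1).
Proof.
apply: contraR => h; rewrite cfv_out //; by rewrite inE.
Qed.

Definition Wm t : 'M[R]_(#|Ek|, d) :=
  \matrix_(i, l) \sum_(x | x \notin t) (enum_val i == t :|: [set x])%:R * V x l.
Definition Pm t : 'M[R]_d := \matrix_(l, j) Nvec t j l.

Lemma cW c t l0 : (c *m Wm t) 0 l0 = \sum_(x | x \notin t) cfv c (t :|: [set x]) * V x l0.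
Proof.
rewrite mxE; under eq_bigr do rewrite mxE mulr_sumr.
rewrite exchange_big /=; apply: eq_bigr => x _; rewrite /cfv mulr_suml.
by apply: eq_bigr => i _; rewrite mulrA [c 0 i * _]mulrC.
Qed.

Lemma cWP c t j : (c *m (Wm t *m Pm t)) 0 j =
  \sum_(x | x \notin t) lin (Nvec t j) x * cfv c (t :|: [set x]).
Proof.
rewrite mulmxA mxE; under eq_bigr do rewrite cW mulr_suml.
rewrite exchange_big /=; apply: eq_bigr => x _.
rewrite /lin mulr_suml; apply: eq_bigr => l0 _.
by rewrite mxE mulrAC [RHS]mulrC mulrA.
Qed.

Definition Cmx := (\bigcap_(t in Tk) kermx (Wm t *m Pm t))%MS.

Lemma C_bal (r : 'rV[R]_#|Ek|) : (r <= Cmx)%MS -> forall t, t \in D -> #|t| = k -> forall j,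
  \sum_(x | x \notin t) lin (Nvec t j) x * cfv r (t :|: [set x]) = 0.
Proof.
move=> /sub_bigcapmxP hr t hD ht j.
have hT : t \in Tk by rewrite inE hD ht eqxx.
have /sub_kermxP := hr t hT => h.
by rewrite -cWP h mxE.
Qed.

Definition Amx : 'M[R]_(#|Tk|, #|Ek|) := \matrix_(i, j) alpha (enum_val j) (enum_val i).

Lemma C_sub : (Cmx <= Amx)%MS.
Proof.
apply/row_subP => i; set r := row i Cmx.
have rC : (r <= Cmx)%MS := row_sub i Cmx.
have [phi [vphi hphi]] := extension (cf := cfv r) (@cfv_Hc0 r) (C_bal rC).
apply/submxP; exists (\row_(i0 < #|Tk|) Phi phi (l * 'X_[msq (enum_val i0)])).
apply/rowP => j; rewrite [RHS]mxE -cfv_val.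
have hj : enum_val j \in Ek := enum_valP j.
have hc : #|enum_val j| = k.+1 by move: hj; rewrite inE => /andP [_ /eqP].
rewrite -hphi // (key vphi hj) (big_enum_val (fun t => alpha (enum_val j) t * Phi phi (l * 'X_[msq t]))) /=.
by apply: eq_bigr => i0 _; rewrite !mxE mulrC.
Qed.

Lemma rankP t : t \in Tk -> (\rank (Pm t) <= d - k)%N.
Proof.
rewrite inE => /andP [hD /eqP ht].
pose Bm : 'M[R]_(#|t|, d) := \matrix_(i, l0) V (enum_val i) l0.
pose Lm : 'M[R]_(d, #|t|) := \matrix_(l0, i) L t (enum_val i) l0.
have evE (i i' : 'I_#|t|) : (enum_val i == enum_val i' :> 'I_n) = (i == i').
  by rewrite (inj_eq (@enum_val_inj _ _)).
have BL : Bm *m Lm = 1%:M.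
  apply/matrixP => i i'; rewrite !mxE.
  rewrite (eq_bigr (fun l0 => L t (enum_val i') l0 * V (enum_val i) l0)); last first.
    by move=> l0 _; rewrite !mxE mulrC.
  by rewrite -/(lin _ _) HL ?enum_valP // evE eq_sym.
have rB : \rank Bm = #|t| by apply/eqP; apply/row_freeP; exists Lm.
have BP : Bm *m Pm t = 0.
  apply/matrixP => i j; rewrite !mxE.
  rewrite (eq_bigr (fun l0 => Nvec t j l0 * V (enum_val i) l0)); last first.
    by move=> l0 _; rewrite !mxE mulrC.
  by rewrite -/(lin _ _) lin_Nvec ?enum_valP.
have hk : (Bm <= kermx (Pm t))%MS by apply/sub_kermxP.
have := mxrankS hk; rewrite mxrank_ker rB ht.
have := rank_leq_row (Pm t); lia.
Qed.

Lemma final_ineq : (#|Ek| <= #|Tk| + #|Tk| * (d - k))%N.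
Proof.
have h1 : (#|Ek| <= \rank Cmx + \sum_(t in Tk) (#|Ek| - \rank (kermx (Wm t *m Pm t))))%N.
  exact: (rank_bigcap (fun t => t \in Tk) (fun t => kermx (Wm t *m Pm t))).
have h2 : (\rank Cmx <= #|Tk|)%N.
  by apply: leq_trans (mxrankS C_sub) _; apply: rank_leq_row.
have h3 : (\sum_(t in Tk) (#|Ek| - \rank (kermx (Wm t *m Pm t))) <= #|Tk| * (d - k))%N.
  rewrite -sum_nat_const; apply: leq_sum => t ht.
  rewrite mxrank_ker subKn ?rank_leq_row //.
  exact: leq_trans (mxrankM_maxr _ _) (rankP ht).
lia.
Qed.

End Main.

Lemma ideal_sub (R : realType) (n d : nat) (S D : complex_on n) (V : 'M[R]_(n, d))
  (f : {mpoly R[n]}) : D \subset S -> in_lsop_ideal S V f -> in_lsop_ideal D V f.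
Proof.
move=> DS [g [h ->]]; exists g, (fun t => if t \in S then 0%R else h t); congr (_ + _)%R.
rewrite big_mkcond [RHS]big_mkcond; apply: eq_bigr => t _.
have [hS|hS] := boolP (t \in S); first by rewrite /= ?GRing.mul0r; case: (t \in D).
have -> : t \notin D by apply: contra hS; apply: (subsetP DS).
by [].
Qed.

Theorem corollary4p8 (R : realType) (n k : nat) (S : complex_on n)
    (V : 'M[R]_(n, 2 * k + 1)) :
  rational_sphere k S ->
  is_lsop S V ->
  hard_lefschetz S V ->
  forall D : complex_on n,
    is_simplicial_complex D -> D \subset S ->
    (fsize D k.+1 <= (k + 2) * fsize D k)%N.
Proof.
move=> _ lsop [l [_ hlef]] D [_ Dcl] DS.
have exL : forall rho : {set 'I_n}, exists L0 : 'I_n -> 'I_(2 * k + 1) -> R,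
    rho \in D -> forall u x, u \in rho -> x \in rho ->
      (\sum_l L0 u l * V x l = (u == x)%:R)%R.
  move=> rho; have [h|h] := boolP (rho \in D); last by exists (fun _ _ => 0%R).
  have [L0 HL0] := dual_exists (lsop rho (subsetP DS _ h)).
  by exists L0.
have [L HL] := boolp.choice exL.
have [_ surj] := hlef k ltac:(lia).
have e1 : (2 * k + 1 - k = k.+1)%N by lia.
have e2 : (2 * k + 1 - 2 * k = 1)%N by lia.
rewrite e1 e2 in surj.
have exP : forall sg : {set 'I_n}, exists p0 : {mpoly R[n]},
    sg \in Ek k D -> p0 \is [in R[n], k.-homog] /\
       in_lsop_ideal D V ('X_[msq sg] - l * p0)%R.
  move=> sg; have [h|h] := boolP (sg \in Ek k D); last by exists 0%R.
  have hs : #|sg| = k.+1 by move: h; rewrite inE => /andP [_ /eqP].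
  have hq : 'X_[msq sg] \is [in R[n], (k.+1).-homog].
    by rewrite dhomogX; apply/eqP; rewrite -hs; exact: mdeg_msq.
  have [p0 hp0 hid] := surj _ hq.
  exists p0 => _; split => //; rewrite GRing.expr1 -sqfreeE in hid.
  by rewrite -sqfreeE; apply: ideal_sub hid.
have [p Hp] := boolp.choice exP.
have exA : forall m : 'X_{1..n}, exists a0 : {set 'I_n} -> R, mdeg m = k ->
    forall phi, valid V D phi -> forall m',
      phi (m + m')%MM = (\sum_(t in Tk k D) a0 t * phi (msq t + m')%MM)%R.
  move=> m; have [h|h] := eqVneq (mdeg m) k; last by exists (fun _ => 0%R) => hm; move: h; rewrite hm eqxx.
  have [a0 Ha0] := span_mon Dcl HL h.
  by exists a0.
have [a Ha] := boolp.choice exA.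
have := final_ineq Dcl HL Hp Ha.
rewrite /fsize /Ek /Tk e1; nia.
Qed.
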